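(* Let $F\colon\mathbb{R}^{n_1}\times\mathbb{R}^{n_2}\to\mathcal{K}_{bcs}(\mathbb{R}^d)$ be locally integrably bounded and assume also that $M_\mathcal{K}^2F$ is locally integrably bounded. Then $M_\mathcal{K}^sF(x)\subset M_\mathcal{K}^1M_\mathcal{K}^2F(x)$ for every $x\in\mathbb{R}^{n_1}\times\mathbb{R}^{n_2}$.
   Context: $\mathcal{K}_{bcs}(\mathbb{R}^d)$ is the collection of compact, convex, symmetric subsets of $\mathbb{R}^d$. For $A\subset\mathbb{R}^d$, $|A|:=\sup\{|a|:a\in A\}$. A set-valued $F\colon\mathbb{R}^n\to\mathcal{K}(\mathbb{R}^d)$ (closed sets) is measurable iff there are measurable $f_k\colon\mathbb{R}^n\to\mathbb{R}^d$ with $F(x)=\overline{\{f_k(x):k\in\mathbb{N}\}}$ for all $x$; it is locally integrably bounded if $|F(x)|\le k(x)$ for all $x$ with some $k\in L^1_{loc}$. $S^0(F)$ is the set of measurable $f\colon\mathbb{R}^n\to\mathbb{R}^d$ with $f(x)\in F(x)$ for all $x$. For a set $E$ of positive finite measure, $\langle F\rangle_E:=\{\fint_E f:f\in S^0(F)\}$ (Aumann average). $\mathcal{R}$ is the set of rectangles $Q_1\times Q_2$ with $Q_i\subset\mathbb{R}^{n_i}$ axis-parallel cubes. The strong convex set-valued maximal operator is $M_\mathcal{K}^sF(x):=\overline{\operatorname{conv}}\big(\{\langle f\rangle_R1_R(x):R\in\mathcal{R},f\in S^0(F)\}\big)$. The one-parameter operator on $\mathbb{R}^m$ is $M_\mathcal{K}G(x):=\overline{\operatorname{conv}}\big(\{\langle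 g\rangle_Q1_Q(x):Q\subset\mathbb{R}^m\text{ cube},g\in S^0(G)\}\big)$, and $M_\mathcal{K}^1F(x_1,x_2):=M_\mathcal{K}(F(\cdot,x_2))(x_1)$, $M_\mathcal{K}^2F(x_1,x_2):=M_\mathcal{K}(F(x_1,\cdot))(x_2)$. *)

(* Defs.v *)
From HB Require Import structures.
From mathcomp Require Import all_boot all_order all_algebra.
From mathcomp Require Import all_classical all_reals all_analysis.
Set Implicit Arguments. Unset Strict Implicit. Unset Printing Implicit Defensive.
Import Order.TTheory GRing.Theory Num.Theory.
Import numFieldNormedType.Exports.
Local Open Scope classical_set_scope.
Local Open Scope ring_scope.

(* R^n is modelled by n.-tuple R, with the library's canonical product
   sigma-algebra (generated by the coordinate maps = Borel sigma-algebra). *)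

Definition box (R : realType) (n : nat) (a b : n.-tuple R) : set (n.-tuple R) :=
  [set x | forall i, tnth a i <= tnth x i <= tnth b i].

Definition cube (R : realType) (n : nat) (c : n.-tuple R) (r : R) : set (n.-tuple R) :=
  [set x | forall i, `|tnth x i - tnth c i| <= r].

(* mu is Lebesgue measure on (the Borel sets of) R^n: it is a measure giving
   every box its volume; this determines it uniquely. *)
Definition is_lebesgue (R : realType) (n : nat)
    (mu : {measure set (n.-tuple R) -> \bar R}) : Prop :=
  forall a b : n.-tuple R, (forall i, tnth a i <= tnth b i) ->
    mu (box a b) = (\prod_(i < n) (tnth b i - tnth a i))%:E.

Definition is_lebesgue2 (R : realType) (n1 n2 : nat)
    (mu : {measure set (n1.-tuple R * n2.-tuple R) -> \bar R}) : Prop :=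
  forall (a1 b1 : n1.-tuple R) (a2 b2 : n2.-tuple R),
    (forall i, tnth a1 i <= tnth b1 i) -> (forall i, tnth a2 i <= tnth b2 i) ->
    mu (box a1 b1 `*` box a2 b2) =
      ((\prod_(i < n1) (tnth b1 i - tnth a1 i)) *
       (\prod_(i < n2) (tnth b2 i - tnth a2 i)))%:E.

Definition rects (R : realType) (n1 n2 : nat) : set (set (n1.-tuple R * n2.-tuple R)) :=
  [set Q | exists (c1 : n1.-tuple R) (r1 : R) (c2 : n2.-tuple R) (r2 : R),
      0 < r1 /\ 0 < r2 /\ Q = cube c1 r1 `*` cube c2 r2].

Definition cubes (R : realType) (n : nat) : set (set (n.-tuple R)) :=
  [set Q | exists (c : n.-tuple R) (r : R), 0 < r /\ Q = cube c r].

Definition convex_set (R : realType) (d : nat) (A : set 'rV[R]_d) : Prop :=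
  forall x y (t : R), A x -> A y -> 0 <= t <= 1 -> A (t *: x + (1 - t) *: y).

Definition symmetric_set (R : realType) (d : nat) (A : set 'rV[R]_d) : Prop :=
  forall x, A x -> A (- x).

Definition Kbcs (R : realType) (d : nat) (A : set 'rV[R]_d) : Prop :=
  compact A /\ convex_set A /\ symmetric_set A.

Definition conv_hull (R : realType) (d : nat) (A : set 'rV[R]_d) : set 'rV[R]_d :=
  \bigcap_(C in [set C | convex_set C /\ A `<=` C]) C.

Definition meas_vfun (dT : measure_display) (T : measurableType dT)
    (R : realType) (d : nat) (f : T -> 'rV[R]_d) : Prop :=
  forall i : 'I_d, measurable_fun setT (fun x => f x ord0 i).

Definition meas_setfun (dT : measure_display) (T : measurableType dT)
    (R : realType) (d : nat) (F : T -> set 'rV[R]_d) : Prop :=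
  exists fk : nat -> T -> 'rV[R]_d,
    (forall k, meas_vfun (fk k)) /\
    forall x, F x = closure (range (fun k => fk k x)).

Definition S0 (dT : measure_display) (T : measurableType dT)
    (R : realType) (d : nat) (F : T -> set 'rV[R]_d) : set (T -> 'rV[R]_d) :=
  [set f | meas_vfun f /\ forall x, F x (f x)].

(* local integrable boundedness: |F(x)| <= k(x) with k in L^1_loc
   (integrable on every bounded set of the given family Bnd, which is
   cofinal among bounded sets) *)
Definition loc_int_bdd (dT : measure_display) (T : measurableType dT)
    (R : realType) (d : nat) (mu : {measure set T -> \bar R})
    (Bnd : set (set T)) (F : T -> set 'rV[R]_d) : Prop :=
  exists k : T -> R,
    measurable_fun setT k /\
    (forall B, Bnd B -> mu.-integrable B (fun x => (k x)%:E)) /\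
    forall x a, F x a -> `|a| <= k x.

Definition vintegrable (dT : measure_display) (T : measurableType dT)
    (R : realType) (d : nat) (mu : {measure set T -> \bar R})
    (E : set T) (f : T -> 'rV[R]_d) : Prop :=
  forall i : 'I_d, mu.-integrable E (fun x => (f x ord0 i)%:E).

Definition vavg (dT : measure_display) (T : measurableType dT)
    (R : realType) (d : nat) (mu : {measure set T -> \bar R})
    (E : set T) (f : T -> 'rV[R]_d) : 'rV[R]_d :=
  (fine (mu E))^-1 *: \row_(i < d) fine (\int[mu]_(x in E) (f x ord0 i)%:E).

Definition MK (R : realType) (n d : nat) (mu : {measure set (n.-tuple R) -> \bar R})
    (G : n.-tuple R -> set 'rV[R]_d) (x : n.-tuple R) : set 'rV[R]_d :=
  closure (conv_hull
    [set v | exists Q g, cubes Q /\ S0 G g /\ vintegrable mu Q g /\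
                         v = \1_Q x *: vavg mu Q g]).

Definition MK1 (R : realType) (n1 n2 d : nat) (mu1 : {measure set (n1.-tuple R) -> \bar R})
    (F : n1.-tuple R * n2.-tuple R -> set 'rV[R]_d) (x : n1.-tuple R * n2.-tuple R) :=
  MK mu1 (fun y => F (y, x.2)) x.1.

Definition MK2 (R : realType) (n1 n2 d : nat) (mu2 : {measure set (n2.-tuple R) -> \bar R})
    (F : n1.-tuple R * n2.-tuple R -> set 'rV[R]_d) (x : n1.-tuple R * n2.-tuple R) :=
  MK mu2 (fun y => F (x.1, y)) x.2.

Definition MKs (R : realType) (n1 n2 d : nat)
    (mu : {measure set (n1.-tuple R * n2.-tuple R) -> \bar R})
    (F : n1.-tuple R * n2.-tuple R -> set 'rV[R]_d) (x : n1.-tuple R * n2.-tuple R) :=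
  closure (conv_hull
    [set v | exists Q f, @rects R n1 n2 Q /\ S0 F f /\ vintegrable mu Q f /\
                         v = \1_Q x *: vavg mu Q f]).

(* Main.v *)
Require Import Defs.
From HB Require Import structures.
From mathcomp Require Import all_boot all_order all_algebra.
From mathcomp Require Import all_classical all_reals all_analysis.
From mathcomp Require Import lra measurable_realfun.
Import Order.TTheory GRing.Theory Num.Theory.
Import numFieldNormedType.Exports.
Local Open Scope classical_set_scope.
Local Open Scope ring_scope.
Set Implicit Arguments. Unset Strict Implicit. Unset Printing Implicit Defensive.

Section boxes.
Variable R : realType.

Lemma boxE n (a b : n.-tuple R) :
  box a b = \bigcap_(i in [set: 'I_n]) ((@tnth n R)^~ i @^-1` `[tnth a i, tnth b i]).
Proof.
apply/seteqP; split => x /=.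
  by move=> H i _; rewrite /= in_itv /=; exact: H.
by move=> H i; have := H i I; rewrite /= in_itv.
Qed.

Lemma measurable_box n (a b : n.-tuple R) : measurable (box a b).
Proof.
rewrite boxE; apply: fin_bigcap_measurable => // i _.
rewrite -[X in measurable X]setTI; apply: measurable_tnth => //.
Qed.


Lemma le_sum1 n (F : 'I_n -> R) i : (forall j, 0 <= F j) -> F i <= \sum_j F j.
Proof.
move=> F0; rewrite (bigD1 i) //= lerDl; exact: sumr_ge0.
Qed.

Lemma exists_bound n (x : n.-tuple R) : exists k : nat, forall j, `|tnth x j| <= k%:R.
Proof.
exists (Num.bound (\sum_j `|tnth x j|)) => j.
apply: le_trans (ltW (Num.Theory.archi_boundP _)); last exact: sumr_ge0.
by apply: le_sum1 => ?; exact: normr_ge0.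
Qed.

Definition lot n (k : nat) : n.-tuple R := [tuple (- k%:R) | _ < n].
Definition hit n (k : nat) : n.-tuple R := [tuple (k%:R) | _ < n].
Arguments lot : clear implicits.
Arguments hit : clear implicits.

Lemma in_bigbox n (x : n.-tuple R) : exists k : nat, forall k', (k <= k')%N -> box (lot n k') (hit n k') x.
Proof.
have [k Hk] := exists_bound x; exists k => k' kk' j.
rewrite !tnth_mktuple -ler_norml; apply: le_trans (Hk j) _.
by rewrite ler_nat.
Qed.

Lemma bigsetU_ex (T : Type) n (F : 'I_n -> set T) y :
  (\big[setU/set0]_(i < n) F i) y -> exists i, F i y.
Proof.
apply: (big_rec (fun S => S y -> exists i, F i y)) => // i S _ IH [Fy|Sy].
  by exists i.
exact: IH.
Qed.

Definition PB n1 n2 : set (set (n1.-tuple R * n2.-tuple R)) :=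
  [set X | exists a1 b1 a2 b2, X = box a1 b1 `*` box a2 b2].
Arguments PB : clear implicits.

Lemma PB_measurable n1 n2 : PB n1 n2 `<=` measurable.
Proof.
move=> _ [a1 [b1 [a2 [b2 ->]]]]; apply: measurableX; exact: measurable_box.
Qed.

Lemma boxI n (a b a' b' : n.-tuple R) :
  box a b `&` box a' b' =
  box [tuple Order.max (tnth a j) (tnth a' j) | j < n]
      [tuple Order.min (tnth b j) (tnth b' j) | j < n].
Proof.
apply/seteqP; split => x /=.
  move=> [H1 H2] j; rewrite !tnth_mktuple ge_max le_min.
  by case/andP: (H1 j) => -> ->; case/andP: (H2 j) => -> ->.
move=> H; split => j; have := H j; rewrite !tnth_mktuple ge_max le_min;
  by case/andP => /andP[? ?] /andP[? ?]; apply/andP.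
Qed.

Lemma PB_setI n1 n2 : setI_closed (PB n1 n2).
Proof.
move=> _ _ [a1 [b1 [a2 [b2 ->]]]] [a1' [b1' [a2' [b2' ->]]]].
rewrite -setXI !boxI; do 4 eexists; reflexivity.
Qed.

Lemma PB_coord1 n1 n2 (i : 'I_n1) (y : R) :
  <<s PB n1 n2 >> [set p | y <= tnth p.1 i].
Proof.
have -> : [set p : n1.-tuple R * n2.-tuple R | y <= tnth p.1 i] =
  \bigcup_k (box [tuple if j == i then y else - k%:R | j < n1] (hit n1 k)
              `*` box (lot n2 k) (hit n2 k)).
  apply/seteqP; split => p /=.
    move=> yp; have [k1 H1] := in_bigbox p.1; have [k2 H2] := in_bigbox p.2.
    exists (maxn k1 k2) => //; split => /=; last by apply: H2; exact: leq_maxr.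
    move=> j; have := H1 (maxn k1 k2) (leq_maxl _ _) j.
    rewrite !tnth_mktuple; case: eqP => [->|//].
    by case/andP => _ ->; rewrite yp.
  move=> [k _ [/= H1 _]]; have := H1 i.
  by rewrite tnth_mktuple eqxx => /andP[].
apply: sigma_algebra_bigcup => k; apply: sub_sigma_algebra.
by do 4 eexists; reflexivity.
Qed.

Lemma PB_coord2 n1 n2 (i : 'I_n2) (y : R) :
  <<s PB n1 n2 >> [set p | y <= tnth p.2 i].
Proof.
have -> : [set p : n1.-tuple R * n2.-tuple R | y <= tnth p.2 i] =
  \bigcup_k (box (lot n1 k) (hit n1 k) `*`
             box [tuple if j == i then y else - k%:R | j < n2] (hit n2 k)).
  apply/seteqP; split => p /=.
    move=> yp; have [k1 H1] := in_bigbox p.1; have [k2 H2] := in_bigbox p.2.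
    exists (maxn k1 k2) => //; split => /=; first by apply: H1; exact: leq_maxl.
    move=> j; have := H2 (maxn k1 k2) (leq_maxr _ _) j.
    rewrite !tnth_mktuple; case: eqP => [->|//].
    by case/andP => _ ->; rewrite yp.
  move=> [k _ [/= _ H2]]; have := H2 i.
  by rewrite tnth_mktuple eqxx => /andP[].
apply: sigma_algebra_bigcup => k; apply: sub_sigma_algebra.
by do 4 eexists; reflexivity.
Qed.

Lemma measurable_PB n1 n2 :
  (@measurable _ (n1.-tuple R * n2.-tuple R)%type) = <<s PB n1 n2 >>.
Proof.
apply/seteqP; split; last first.
  apply: smallest_sub; first exact: sigma_algebra_measurable.
  exact: PB_measurable.
have sPB : sigma_algebra setT <<s PB n1 n2 >> := smallest_sigma_algebra _ _.
apply: smallest_sub => //.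
move=> X [[A mA <-]|[A mA <-]].
- have sS1 := sigma_algebra_image (@fst _ (n2.-tuple R)) sPB.
  apply: (smallest_sub sS1 _ mA).
  move=> Y /(@bigsetU_ex (set (n1.-tuple R)) n1 _ Y)[i [B mB <-]].
  have sS1i := sigma_algebra_image (fun p : n1.-tuple R * n2.-tuple R => tnth p.1 i) sPB.
  have : image_set_system setT (fun p : n1.-tuple R * n2.-tuple R => tnth p.1 i)
           <<s PB n1 n2 >> B.
    have mB2 : (@ocitv R).-sigma.-measurable B := mB.
    move: mB2; rewrite measurable_realfun.RGenCInfty.measurableE => {}mB.
    apply: (smallest_sub sS1i _ mB) => _ [z ->].
    rewrite /image_set_system /= setTI.
    have -> : (fun p : n1.-tuple R * n2.-tuple R => tnth p.1 i) @^-1` `[z, +oo[ =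
              [set p | z <= tnth p.1 i].
      by apply/seteqP; split => p /=; rewrite in_itv /= andbT.
    exact: PB_coord1.
  rewrite /image_set_system /= !setTI.
  by congr (<<s _ >> _); apply/seteqP; split => p /=.
- have sS1 := sigma_algebra_image (@snd (n1.-tuple R) (n2.-tuple R)) sPB.
  apply: (smallest_sub sS1 _ mA).
  move=> Y /(@bigsetU_ex (set (n2.-tuple R)) n2 _ Y)[i [B mB <-]].
  have sS1i := sigma_algebra_image (fun p : n1.-tuple R * n2.-tuple R => tnth p.2 i) sPB.
  have : image_set_system setT (fun p : n1.-tuple R * n2.-tuple R => tnth p.2 i)
           <<s PB n1 n2 >> B.
    have mB2 : (@ocitv R).-sigma.-measurable B := mB.
    move: mB2; rewrite measurable_realfun.RGenCInfty.measurableE => {}mB.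
    apply: (smallest_sub sS1i _ mB) => _ [z ->].
    rewrite /image_set_system /= setTI.
    have -> : (fun p : n1.-tuple R * n2.-tuple R => tnth p.2 i) @^-1` `[z, +oo[ =
              [set p | z <= tnth p.2 i].
      by apply/seteqP; split => p /=; rewrite in_itv /= andbT.
    exact: PB_coord2.
  rewrite /image_set_system /= !setTI.
  by congr (<<s _ >> _); apply/seteqP; split => p /=.
Qed.

End boxes.

Lemma cube_box (R : realType) n (c : n.-tuple R) r :
  cube c r = box [tuple tnth c i - r | i < n] [tuple tnth c i + r | i < n].
Proof.
apply/seteqP; split => x /= H i; rewrite ?tnth_mktuple.
  by rewrite -ler_distl; exact: H.
by have := H i; rewrite !tnth_mktuple -ler_distl.
Qed.

Lemma F0 (R : realType) (dT : measure_display) (T : measurableType dT) (d : nat)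
  (F : T -> set 'rV[R]_d) (f : T -> 'rV[R]_d) :
  S0 F f -> (forall p, Kbcs (F p)) -> forall p, F p 0.
Proof.
move=> Sf K p; have [_ [cF sF]] := K p; have Fa := Sf.2 p; have Fna := sF _ Fa.
have := cF (f p) (- f p) (2^-1) Fa Fna.
rewrite (_ : 1 - 2^-1 = 2^-1 :> R); last lra.
rewrite scalerN addrN; apply; apply/andP; split; lra.
Qed.

Lemma vavg0 (R : realType) (dT : measure_display) (T : measurableType dT) (d : nat)
  (m : {measure set T -> \bar R}) D : vavg m D (fun _ => 0 : 'rV[R]_d) = 0.
Proof.
rewrite /vavg; apply/rowP => j; rewrite !mxE.
by rewrite integral0 /= mulr0.
Qed.

Section prodmeas.
Variable R : realType.
Local Open Scope ereal_scope.

Lemma lot_le_hit n k i : (tnth (lot R n k) i <= tnth (hit R n k) i)%R.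
Proof. rewrite !tnth_mktuple; have := ler0n R k; lra. Qed.

Lemma lebesgue_sigma_finite n (m : {measure set (n.-tuple R) -> \bar R}) :
  is_lebesgue m -> sigma_finite setT m.
Proof.
move=> L; exists (fun k => box (lot R n k) (hit R n k)).
  apply/seteqP; split => // x _; have [k Hk] := in_bigbox x.
  by exists k => //; apply: Hk.
move=> k; split; first exact: measurable_box.
by rewrite L ?ltry // => i; exact: lot_le_hit.
Qed.

Variables (n1 n2 : nat).
Variables (mu1 : {measure set (n1.-tuple R) -> \bar R})
          (mu2 : {measure set (n2.-tuple R) -> \bar R})
          (mu : {measure set (n1.-tuple R * n2.-tuple R) -> \bar R}).
Hypotheses (L1 : is_lebesgue mu1) (L2 : is_lebesgue mu2) (L : is_lebesgue2 mu).

Definition smu1 (A : set (n1.-tuple R)) := mu1 A.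
Definition smu2 (A : set (n2.-tuple R)) := mu2 A.
HB.instance Definition _ := Measure.on smu1.
HB.instance Definition _ := Measure.on smu2.
HB.instance Definition _ := @Measure_isSigmaFinite.Build _ _ _ smu1 (lebesgue_sigma_finite L1).
HB.instance Definition _ := @Measure_isSigmaFinite.Build _ _ _ smu2 (lebesgue_sigma_finite L2).

Notation P := (smu1 \x smu2)%E.

Lemma mu_prod A : measurable A -> mu A = P A.
Proof.
move=> mA.
have := (measure_unique (@PB R n1 n2)
  (fun k => box (lot R n1 k) (hit R n1 k) `*` box (lot R n2 k) (hit R n2 k))).
move=> H; apply: (H R) => //.
- exact: measurable_PB.
- exact: PB_setI.
- by move=> k; do 4 eexists.
- apply/seteqP; split => // x _; have [k1 H1] := in_bigbox x.1.
  have [k2 H2] := in_bigbox x.2.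
  exists (maxn k1 k2) => //; split; [apply: H1; exact: leq_maxl|apply: H2; exact: leq_maxr].
- move=> _ [a1 [b1 [a2 [b2 ->]]]].
  have [[h1 h2]|hno] := pselect ((forall i, tnth a1 i <= tnth b1 i)%R /\
                                 (forall i, tnth a2 i <= tnth b2 i)%R).
    rewrite L // [RHS]product_measure1E; try exact: measurable_box.
    by rewrite /= /smu1 /smu2 L1 // L2 // EFinM.
  have -> : box a1 b1 `*` box a2 b2 = set0.
    apply/seteqP; split => // x [/= H1 H2]; apply: hno; split => i.
      by case/andP: (H1 i); exact: le_trans.
    by case/andP: (H2 i); exact: le_trans.
  by rewrite !measure0.
- move=> k; rewrite L ?ltry // => i; exact: lot_le_hit.
Qed.

Lemma int_prod D (f : n1.-tuple R * n2.-tuple R -> \bar R) :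
  \int[mu]_(x in D) f x = \int[P]_(x in D) f x.
Proof. by apply: eq_measure_integral => A mA _; rewrite mu_prod. Qed.

Lemma integrable_prod D (f : n1.-tuple R * n2.-tuple R -> \bar R) :
  mu.-integrable D f -> P.-integrable D f.
Proof.
move/integrableP => [mf fi]; apply/integrableP; split => //.
by rewrite -int_prod.
Qed.


Lemma int_s1 D h : \int[mu1]_(x in D) h x = \int[smu1]_(x in D) h x.
Proof. exact: eq_measure_integral. Qed.
Lemma int_s2 D h : \int[mu2]_(x in D) h x = \int[smu2]_(x in D) h x.
Proof. exact: eq_measure_integral. Qed.
Lemma integrable_s1 D h : smu1.-integrable D h -> mu1.-integrable D h.
Proof. by move/integrableP => [mh hi]; apply/integrableP; rewrite int_s1. Qed.
Lemma integrable_s2 D h : smu2.-integrable D h -> mu2.-integrable D h.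
Proof. by move/integrableP => [mh hi]; apply/integrableP; rewrite int_s2. Qed.

Lemma zero_MK2 d (F : n1.-tuple R * n2.-tuple R -> set 'rV[R]_d) f :
  S0 F f -> (forall p, Kbcs (F p)) -> forall p, MK2 mu2 F p 0%R.
Proof.
move=> Sf K p; rewrite /MK2 /MK /=; apply: subset_closure => C [_ SC]; apply: SC.
exists (cube p.2 1%R), (fun _ => 0%R : 'rV[R]_d); split; first by exists p.2, 1%R.
split; first split.
- move=> i; rewrite (_ : (fun _ => _) = cst 0%R); first exact: measurable_cst.
  by apply/funext => z; rewrite mxE.
- by move=> z; exact: (F0 Sf K).
split; last by rewrite vavg0 scaler0.
move=> i; rewrite (_ : (fun _ => _) = cst 0); first exact: integrable0.
by apply/funext => z; rewrite mxE.
Qed.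

Section fub.
Variables (d : nat) (F : n1.-tuple R * n2.-tuple R -> set 'rV[R]_d)
  (f : n1.-tuple R * n2.-tuple R -> 'rV[R]_d).
Variables (c1 : n1.-tuple R) (r1 : R) (c2 : n2.-tuple R) (r2 : R).
Hypotheses (r1p : (0 < r1)%R) (r2p : (0 < r2)%R) (Sf : S0 F f)
  (vf : vintegrable mu (cube c1 r1 `*` cube c2 r2) f).

Local Notation Q1 := (cube c1 r1).
Local Notation Q2 := (cube c2 r2).
Local Notation Q := (cube c1 r1 `*` cube c2 r2).

Definition fi i (p : n1.-tuple R * n2.-tuple R) := (f p ord0 i)%:E.
Definition hi i := (fi i) \_ Q.
Definition Phi i y := \int[smu2]_z hi i (y, z).
Definition Psi i y := \int[smu2]_z `|hi i (y, z)|.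
Definition Good := [set y | Q1 y /\ forall i, Psi i y < +oo].

Lemma mQ1 : measurable Q1. Proof. rewrite cube_box; exact: measurable_box. Qed.
Lemma mQ2 : measurable Q2. Proof. rewrite cube_box; exact: measurable_box. Qed.
Lemma mQ : measurable Q. Proof. exact: measurableX mQ1 mQ2. Qed.

Lemma mfi i : measurable_fun setT (fi i).
Proof. by rewrite /fi; apply/measurable_EFinP; exact: Sf.1. Qed.

Lemma ihi i : P.-integrable setT (hi i).
Proof. by apply/(integrable_mkcond _ mQ); apply: integrable_prod; exact: vf. Qed.

Lemma mhi i : measurable_fun setT (hi i).
Proof. exact: measurable_int (ihi i). Qed.

Lemma mPhi i : measurable_fun setT (Phi i).
Proof. exact: measurable_fubini_F (ihi i). Qed.

Lemma iPhi i : smu1.-integrable setT (Phi i).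
Proof. exact: integrable_fubini_F (ihi i). Qed.

Lemma Phi_int i : \int[smu1]_y Phi i y = \int[P]_p hi i p.
Proof. exact: integral12_prod_meas1 (ihi i). Qed.

Lemma mPsi i : measurable_fun setT (Psi i).
Proof.
apply: (measurable_fun_fubini_tonelli_F (fun p => `|hi i p|)) => //.
exact: measurableT_comp (mhi i).
Qed.

Lemma mGood : measurable Good.
Proof.
have -> : Good = Q1 `&` \bigcap_(i in [set: 'I_d]) (setT `&` [set y | Psi i y < +oo]).
  apply/seteqP; split => y /=.
    by move=> [Q1y H]; split => // i _; split => //; exact: H.
  by move=> [? H]; split => // i; have [] := H i I.
apply: measurableI; first exact: mQ1.
apply: fin_bigcap_measurable => // i _.
apply: emeasurable_fun_infty_o => //; exact: mPsi.
Qed.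

Lemma hiE i y z : Q1 y -> hi i (y, z) = ((fun z => fi i (y, z)) \_ Q2) z.
Proof.
move=> Q1y; rewrite /hi !patchE.
have -> : ((y, z) \in Q) = (z \in Q2).
  by apply/idP/idP => /set_mem H; apply/mem_set; [case: H|split].
by [].
Qed.

Lemma hi0 i y z : ~ Q1 y -> hi i (y, z) = 0.
Proof.
move=> nQ1y; rewrite /hi patchE ifF //; apply/negbTE/negP => /set_mem [] //.
Qed.

Lemma PhiE i y : Q1 y -> Phi i y = \int[smu2]_(z in Q2) fi i (y, z).
Proof.
move=> Q1y; rewrite /Phi [RHS]integral_mkcond; apply: eq_integral => z _.
exact: hiE.
Qed.

Lemma Phi0 i y : ~ Q1 y -> Phi i y = 0.
Proof.
move=> nQ1y; rewrite /Phi (eq_integral (cst 0)); first exact: integral0.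
by move=> z _; rewrite hi0.
Qed.

Lemma sect_int i y : Good y -> smu2.-integrable Q2 (fun z => fi i (y, z)).
Proof.
move=> [Q1y H]; apply/(integrable_mkcond _ mQ2).
rewrite (_ : _ \_ Q2 = fun z => hi i (y, z)); last first.
  by apply/funext => z; rewrite hiE.
apply/integrableP; split; last exact: H i.
exact: measurable_fun_pair2 (mhi i).
Qed.

Lemma Phi_fin i y : Good y -> Phi i y \is a fin_num.
Proof.
move=> Gy; rewrite PhiE; last by case: Gy.
apply: integrable_fin_num; [exact: mQ2|exact: sect_int].
Qed.

Definition g y : 'rV[R]_d :=
  if y \in Good then vavg mu2 Q2 (fun z => f (y, z)) else (0%R : 'rV[R]_d).

Lemma gE y i : g y ord0 i = (\1_Good y * ((fine (mu2 Q2))^-1 * fine (Phi i y)))%R.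
Proof.
rewrite /g indicE; case: ifPn => Gy; last by rewrite mxE mul0r.
rewrite mul1r /vavg !mxE int_s2 PhiE //; by have [] := set_mem Gy.
Qed.

Lemma mg i : measurable_fun setT (fun y => g y ord0 i).
Proof.
rewrite (_ : (fun y => _) =
  (fun y => \1_Good y * ((fine (mu2 Q2))^-1 * fine (Phi i y)))%R); last first.
  by apply/funext => y; exact: gE.
apply: measurable_funM; first exact: measurable_indic mGood.
apply: measurable_funM; first exact: measurable_cst.
apply: measurableT_comp => //; exact: mPhi.
Qed.

Lemma ae_good : {ae smu1, forall y, Q1 y -> Good y}.
Proof.
have H : forall i, {ae smu1, forall y, smu2.-integrable setT (fun z => hi i (y, z))}.
  by move=> i; exact: ae_integrable1 (ihi i).
apply: filterS (filter_forall _ H) => y Hy Q1y; split => // i.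
by have /integrableP[_ ] := Hy i.
Qed.

Lemma iPhiQ1 i : smu1.-integrable Q1 (Phi i).
Proof. exact: integrableS measurableT mQ1 (subsetT _) (iPhi i). Qed.

Lemma ig i : smu1.-integrable Q1 (fun y => (g y ord0 i)%:E).
Proof.
apply: (le_integrable mQ1 _ _ (integrableZl mQ1 ((fine (mu2 Q2))^-1)%R (iPhiQ1 i))).
  by apply/measurable_EFinP; apply: measurable_funTS; exact: mg.
move=> y _; rewrite gE indicE; case: (y \in Good) => /=; last first.
  by rewrite mul0r normr0 abse_ge0.
rewrite mul1r; case: (Phi i y) => [r| |] /=.
- by [].
- by rewrite mulr0 normr0 abse_ge0.
- by rewrite mulr0 normr0 abse_ge0.
Qed.

Lemma int_Q i : \int[mu]_(p in Q) (f p ord0 i)%:E = \int[smu1]_(y in Q1) Phi i y.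
Proof.
rewrite int_prod integral_mkcond.
rewrite (_ : (fun x => (f x ord0 i)%:E) \_ Q = hi i) //.
rewrite -Phi_int [RHS]integral_mkcond; apply: eq_integral => y _.
rewrite patchE; case: ifPn => // /negP nQ1y; rewrite Phi0 //.
by move=> Q1y; apply: nQ1y; exact: mem_set.
Qed.

Lemma int_g i : \int[mu1]_(y in Q1) (g y ord0 i)%:E =
  ((fine (mu2 Q2))^-1)%:E * \int[smu1]_(y in Q1) Phi i y.
Proof.
rewrite int_s1 -(integralZl mQ1); last exact: iPhiQ1.
apply: ae_eq_integral.
- exact: mQ1.
- by apply/measurable_EFinP; apply: measurable_funTS; exact: mg.
- by apply: emeasurable_funM => //; apply: measurable_funTS; exact: mPhi.
apply: filterS ae_good => y Hy Q1y; have Gy := Hy Q1y.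
by rewrite gE indicE mem_set // mul1r EFinM fineK //; exact: Phi_fin.
Qed.

Lemma Q1E : mu1 Q1 = (\prod_(j < n1) (tnth [tuple tnth c1 i + r1 | i < n1] j -
                     tnth [tuple tnth c1 i - r1 | i < n1] j))%:E.
Proof. by rewrite cube_box L1 // => j; rewrite !tnth_mktuple; have := r1p; have := r2p; lra. Qed.
Lemma Q2E : mu2 Q2 = (\prod_(j < n2) (tnth [tuple tnth c2 i + r2 | i < n2] j -
                     tnth [tuple tnth c2 i - r2 | i < n2] j))%:E.
Proof. by rewrite cube_box L2 // => j; rewrite !tnth_mktuple; have := r1p; have := r2p; lra. Qed.
Lemma QE : mu Q = ((\prod_(j < n1) (tnth [tuple tnth c1 i + r1 | i < n1] j -
                     tnth [tuple tnth c1 i - r1 | i < n1] j)) *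
                  (\prod_(j < n2) (tnth [tuple tnth c2 i + r2 | i < n2] j -
                     tnth [tuple tnth c2 i - r2 | i < n2] j)))%:E.
Proof. by rewrite !cube_box L // => j; rewrite !tnth_mktuple; have := r1p; have := r2p; lra. Qed.

Lemma avg_eq : vavg mu1 Q1 g = vavg mu Q f.
Proof.
apply/rowP => i; rewrite /vavg !mxE int_g int_Q Q1E Q2E QE /=.
have Hfin : \int[smu1]_(y in Q1) Phi i y \is a fin_num.
  by apply: integrable_fin_num; [exact: mQ1|exact: iPhiQ1].
rewrite -(fineK Hfin) -EFinM /= invfM; by rewrite mulrA.
Qed.

Hypothesis K : forall p, Kbcs (F p).

Lemma g_in x2 y : Q2 x2 -> MK2 mu2 F (y, x2) (g y).
Proof.
move=> Q2x; case: (boolP (y \in Good)) => Gy; last first.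
  by rewrite /g (negbTE Gy); exact: zero_MK2 Sf K _.
rewrite /MK2 /MK /=; apply: subset_closure => C [_ SC]; apply: SC.
exists Q2, (fun z => f (y, z)); split; first by exists c2, r2.
split; first split.
- by move=> i; exact: measurable_fun_pair2 (Sf.1 i).
- by move=> z; exact: Sf.2.
split; first by move=> i; apply: integrable_s2; exact: sect_int (set_mem Gy).
by rewrite /g Gy indicE (mem_set Q2x) scale1r.
Qed.

Lemma key x : Q x -> exists Q' g', cubes Q' /\ S0 (fun y => MK2 mu2 F (y, x.2)) g' /\
  vintegrable mu1 Q' g' /\ (\1_Q x *: vavg mu Q f = \1_Q' x.1 *: vavg mu1 Q' g')%R.
Proof.
move=> Qx; exists Q1, g; split; first by exists c1, r1.
split; first split; [exact: mg|move=> y; exact: g_in Qx.2|].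
split; first by move=> i; apply: integrable_s1; exact: ig.
by rewrite indicE (mem_set Qx) indicE (mem_set Qx.1) !scale1r avg_eq.
Qed.

End fub.

Lemma main_sec d (F : n1.-tuple R * n2.-tuple R -> set 'rV[R]_d) :
  (forall p, Kbcs (F p)) -> forall x, MKs mu F x `<=` MK1 mu1 (MK2 mu2 F) x.
Proof.
move=> K x; rewrite /MKs /MK1 /MK; apply: closureS => v Hv C [cC SC].
apply: Hv; split => // w [Q [f [[c1 [r1 [c2 [r2 [r1p [r2p ->]]]]]] [Sf [vf ->]]]]].
apply: SC; case: (pselect ((cube c1 r1 `*` cube c2 r2) x)) => Qx.
  exact: (key r1p r2p Sf vf K Qx).
exists (cube x.1 1%R), (fun _ => 0%R : 'rV[R]_d); split; first by exists x.1, 1%R.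
split; first split.
- move=> i; rewrite (_ : (fun _ => _) = cst 0%R); first exact: measurable_cst.
  by apply/funext => z; rewrite mxE.
- by move=> y; exact: zero_MK2 Sf K _.
split; last by rewrite indicE memNset // scale0r vavg0 scaler0.
move=> i; rewrite (_ : (fun _ => _) = cst 0); first exact: integrable0.
by apply/funext => z; rewrite mxE.
Qed.
End prodmeas.

Unset Implicit Arguments.
Set Strict Implicit.

Theorem lemma3p1 (R : realType) (n1 n2 d : nat)
    (mu1 : {measure set (n1.-tuple R) -> \bar R})
    (mu2 : {measure set (n2.-tuple R) -> \bar R})
    (mu : {measure set (n1.-tuple R * n2.-tuple R) -> \bar R})
    (F : n1.-tuple R * n2.-tuple R -> set 'rV[R]_d) :
  is_lebesgue mu1 -> is_lebesgue mu2 -> is_lebesgue2 mu ->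
  (forall x, Kbcs (F x)) ->
  meas_setfun F ->
  loc_int_bdd mu (@rects R n1 n2) F ->
  loc_int_bdd mu (@rects R n1 n2) (MK2 mu2 F) ->
  forall x, MKs mu F x `<=` MK1 mu1 (MK2 mu2 F) x.
Proof.
move=> L1 L2 L K _ _ _ x.
exact: (main_sec L1 L2 L K (x:=x)).
Qed.
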